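(* Let $\gamma$ be a gauge on $\mathbb{R}^d$ and $v\in\mathrm{SD}_\gamma$. Let $A\subset\mathbb{R}^d$ be a finite set with positive weights $w_a$, $a\in A$, and suppose all points of $A$ lie on a line parallel to $v$. Then the Fermat–Weber problem of minimizing $\sum_{a\in A}w_a\gamma(x-a)$ over $x\in\mathbb{R}^d$ has a minimizer lying on that line.
   Context: A gauge $\gamma$ on $\mathbb{R}^d$ is the Minkowski functional of a convex compact set $B_\gamma$ having the origin in its interior (not necessarily symmetric). Its skewness is $\sigma=\sup_{x\neq0}\gamma(x)/\gamma(-x)$ and the set of skewness directions is $\mathrm{SD}_\gamma=\{v:\gamma(v)=\sigma\gamma(-v)=1\}$. *)

(* Defs.v *)
From HB Require Import structures.
From mathcomp Require Import all_boot all_order all_algebra.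
From mathcomp Require Import all_classical all_reals all_analysis.
From mathcomp Require Import finmap.
Set Implicit Arguments. Unset Strict Implicit. Unset Printing Implicit Defensive.
Import Order.TTheory GRing.Theory Num.Theory.
Local Open Scope classical_set_scope.
Local Open Scope ring_scope.

Definition convexB {R : realType} {d : nat} (B : set 'rV[R^o]_d) : Prop :=
  forall x y, B x -> B y -> forall t : R, 0 <= t <= 1 ->
    B ((1 - t) *: x + t *: y).

Definition gauge_body {R : realType} {d : nat} (B : set 'rV[R^o]_d) : Prop :=
  [/\ convexB B, compact B & interior B 0].

Definition gaugeB {R : realType} {d : nat} (B : set 'rV[R^o]_d)
  (x : 'rV[R^o]_d) : R :=
  inf [set t : R | 0 < t /\ B (t^-1 *: x)].

Definition skewness {R : realType} {d : nat} (B : set 'rV[R^o]_d) : R :=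
  sup [set gaugeB B x / gaugeB B (- x) | x in [set x | x != 0]].

Definition skew_dirs {R : realType} {d : nat} (B : set 'rV[R^o]_d)
  : set 'rV[R^o]_d :=
  [set v | gaugeB B v = 1 /\ skewness B * gaugeB B (- v) = 1].

(* Main.v *)
Require Import Defs.
From HB Require Import structures.
From mathcomp Require Import all_boot all_order all_algebra.
From mathcomp Require Import all_classical all_reals all_analysis.
From mathcomp Require Import finmap.
From mathcomp Require Import ring lra.
Import Order.TTheory GRing.Theory Num.Theory numFieldNormedType.Exports.
Local Open Scope classical_set_scope.
Local Open Scope ring_scope.

Lemma gauge_lb (R : realType) (d : nat) (B : set 'rV[R^o]_d) z t :
  0 < t -> B (t^-1 *: z) -> gaugeB B z <= t.
Proof.
move=> t0 Bt; apply: ge_inf => //; exists 0 => u [u0 _]; exact: ltW.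
Qed.

Lemma gauge_ge0 (R : realType) (d : nat) (B : set 'rV[R^o]_d) z :
  0 <= gaugeB B z.
Proof.
rewrite /gaugeB.
have [[t Ht]|S0] := pselect (exists t, [set t : R | 0 < t /\ B (t^-1 *: z)] t).
  apply: lb_le_inf; first by exists t.
  by move=> u [u0 _]; exact: ltW.
rewrite (_ : [set t : R | 0 < t /\ B (t^-1 *: z)] = set0) ?inf0 //.
by apply/seteqP; split => u Hu //; exfalso; apply: S0; exists u.
Qed.

Lemma gauge_absorb (R : realType) (d : nat) (B : set 'rV[R^o]_d) :
  gauge_body B -> forall z, exists t, 0 < t /\ B (t^-1 *: z).
Proof.
case=> _ _ /nbhs_ballP [r /= r0 Hr] z.
exists ((`|z| + 1) / r); split.
  by apply: divr_gt0 => //; rewrite ltr_pwDr.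
apply: Hr; rewrite -ball_normE /= sub0r normrN normrZ invf_div.
rewrite ger0_norm; last by apply: divr_ge0; [exact: ltW|rewrite addr_ge0].
rewrite mulrAC ltr_pdivrMr ?ltr_pwDr //.
idtac.
by rewrite ltr_pM2l // ltrDl.
Qed.

Lemma gauge_glb (R : realType) (d : nat) (B : set 'rV[R^o]_d) z c :
  gauge_body B -> (forall t, 0 < t -> B (t^-1 *: z) -> c <= t) ->
  c <= gaugeB B z.
Proof.
move=> hB H; apply: lb_le_inf.
  by have [t [t0 Bt]] := gauge_absorb _ _ _ hB z; exists t.
by move=> u [u0 Bu]; exact: H.
Qed.

Lemma gauge_hom (R : realType) (d : nat) (B : set 'rV[R^o]_d) (k : R) z :
  gauge_body B -> 0 < k -> gaugeB B (k *: z) = k * gaugeB B z.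
Proof.
move=> hB k0; apply/eqP; rewrite eq_le; apply/andP; split.
  rewrite mulrC -ler_pdivrMr //; apply: gauge_glb => // t t0 Bt.
  rewrite ler_pdivrMr //; apply: gauge_lb; first exact: mulr_gt0.
  rewrite scalerA.
  by rewrite invfM mulfVK ?gt_eqF.
apply: gauge_glb => // t t0 Bt.
rewrite -ler_pdivlMl //; apply: gauge_lb; first by rewrite mulr_gt0 ?invr_gt0.
rewrite invfM invrK. move: Bt. rewrite scalerA mulrC. done. 
Qed.

Lemma gauge_hasinf (R : realType) (d : nat) (B : set 'rV[R^o]_d) z :
  gauge_body B -> has_inf [set t : R | 0 < t /\ B (t^-1 *: z)].
Proof.
move=> hB; split; first by have [t Ht] := gauge_absorb _ _ _ hB z; exists t.
by exists 0 => u [u0 _]; exact: ltW.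
Qed.

Lemma gauge_sub (R : realType) (d : nat) (B : set 'rV[R^o]_d) x y :
  gauge_body B -> gaugeB B (x + y) <= gaugeB B x + gaugeB B y.
Proof.
move=> hB; have [hconv _ _] := hB.
apply/ler_addgt0Pr => e e0.
have e20 : 0 < e / 2 by rewrite divr_gt0.
have [s [s0 Bs] hs] := inf_adherent e20 (gauge_hasinf _ _ _ x hB).
have [t [t0 Bt] ht] := inf_adherent e20 (gauge_hasinf _ _ _ y hB).
apply: (@le_trans _ _ (s + t)).
  apply: gauge_lb; first exact: addr_gt0.
  have st0 : 0 < s + t by exact: addr_gt0.
  have -> : (s + t)^-1 *: (x + y) =
     (1 - t / (s + t)) *: (s^-1 *: x) + (t / (s + t)) *: (t^-1 *: y).
    rewrite !scalerA scalerDr; congr (_ *: _ + _ *: _).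
      have h1 : s != 0 by rewrite gt_eqF.
      have h2 : s + t != 0 by rewrite gt_eqF.
      change ((s + t)^-1 = (1 - t / (s + t)) * s^-1 :> R).
      by field; rewrite h1 h2.
    have h3 : t != 0 by rewrite gt_eqF.
    have h4 : s + t != 0 by rewrite gt_eqF.
    change ((s + t)^-1 = (t / (s + t)) * t^-1 :> R).
    by field; rewrite h3 h4.
  apply: hconv => //; apply/andP; split.
    by rewrite divr_ge0 // ltW.
  by rewrite ler_pdivrMr // mul1r lerDr ltW.
rewrite /gaugeB in hs ht |- *.
lra.
Qed.

Lemma gauge_gt0 (R : realType) (d : nat) (B : set 'rV[R^o]_d) z :
  gauge_body B -> z != 0 -> 0 < gaugeB B z.
Proof.
move=> hB z0; have [_ cB _] := hB.
have := compact_bounded cB.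
move=> [M [Mreal HM]].
have M1 : M < `|M| + 1 by apply: (le_lt_trans (real_ler_norm Mreal)); rewrite ltrDl.
have HB := HM _ M1.
have M0 : 0 < `|M| + 1 by rewrite ltr_pwDr.
apply: (@lt_le_trans _ _ (`|z| / (`|M| + 1))).
  by rewrite divr_gt0 // normr_gt0.
apply: gauge_glb => // t t0 Bt.
have := HB _ Bt; rewrite /= normrZ gtr0_norm ?invr_gt0 //.
by rewrite ler_pdivrMl // => h; rewrite ler_pdivrMr // mulrC -ler_pdivrMl.
Qed.

Lemma gauge0 (R : realType) (d : nat) (B : set 'rV[R^o]_d) :
  gauge_body B -> gaugeB B 0 = 0.
Proof.
move=> hB; have two : (0:R) < 2 by lra.
have := gauge_hom _ _ _ 2 (0 : 'rV[R^o]_d) hB two.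
rewrite scaler0 => h.
have : (2 - 1) * gaugeB B 0 = 0 by rewrite mulrBl mul1r -h subrr.
by rewrite (_ : 2 - 1 = 1 :> R) ?mul1r //; lra.
Qed.

Lemma gauge_skew (R : realType) (d : nat) (B : set 'rV[R^o]_d) z :
  gauge_body B -> 0 < skewness B -> gaugeB B z <= skewness B * gaugeB B (- z).
Proof.
move=> hB s0.
have [->|z0] := eqVneq z 0; first by rewrite oppr0 gauge0 // mulr0.
have nz0 : - z != 0 by rewrite oppr_eq0.
have hs : has_sup [set gaugeB B x / gaugeB B (- x) | x in [set x | x != 0]].
  apply: contrapT => hns; move: s0; rewrite /skewness sup_out //.
  by rewrite ltxx.
have := ub_le_sup hs.2 (ex_intro2 _ _ z z0 erefl).
by rewrite ler_pdivrMr ?gauge_gt0 // mulrC.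
Qed.

Lemma skew_pos (R : realType) (d : nat) (B : set 'rV[R^o]_d) v :
  gauge_body B -> skew_dirs B v -> 0 < skewness B.
Proof.
move=> hB [_ hv]; rewrite ltNge; apply/negP => h.
have := mulr_le0_ge0 h (gauge_ge0 _ _ B (- v)).
by rewrite hv ler10.
Qed.

Lemma gauge_line (R : realType) (d : nat) (B : set 'rV[R^o]_d) v u :
  gauge_body B -> skew_dirs B v ->
  gaugeB B (u *: v) = Num.max u (- u / skewness B).
Proof.
move=> hB hv; have s0 := skew_pos _ _ _ _ hB hv.
have gv : gaugeB B (- v) = (skewness B)^-1.
  have h := hv.2; by rewrite -[RHS]mulr1 -h mulrA mulVf ?gt_eqF ?mul1r.
have [u0|u0|->] := ltgtP u 0.
- have -> : u *: v = (- u) *: (- v) by rewrite scalerN scaleNr opprK.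
  rewrite gauge_hom // ?oppr_gt0 // gv.
  apply/esym/max_idPr.
  have : 0 <= - u / skewness B by rewrite divr_ge0 // ?oppr_ge0 ltW.
  by move=> h; apply: le_trans h; exact: ltW.
- rewrite gauge_hom // hv.1 mulr1; apply/esym/max_idPl.
  apply: (@le_trans _ _ 0); last exact: ltW.
  by rewrite mulNr oppr_le0 divr_ge0 // ltW.
- by rewrite scale0r gauge0 // oppr0 mul0r maxxx.
Qed.

Lemma sandwich (R : realType) (d : nat) (B : set 'rV[R^o]_d) v y :
  gauge_body B -> skew_dirs B v -> exists c : R, forall r : R,
  Num.max (c - r) (- (c - r) / skewness B) <= gaugeB B (y - r *: v).
Proof.
move=> hB hv; have s0 := skew_pos _ _ _ _ hB hv.
set sg := skewness B.
pose h r := gaugeB B (y - r *: v).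
have h0 : forall r, 0 <= h r by move=> r; exact: gauge_ge0.
have key : forall r1 r2, r1 - sg * h r1 <= r2 + h r2.
  move=> r1 r2; have [le|lt] := leP r1 r2.
    have := h0 r1; have := h0 r2; have : 0 <= sg * h r1 by rewrite mulr_ge0 // ltW.
    lra.
  have h1 : gaugeB B (r1 *: v - y) <= sg * h r1.
    by have := gauge_skew _ _ _ (r1 *: v - y) hB s0; rewrite opprB.
  have h2 := gauge_sub _ _ _ (r1 *: v - y) (y - r2 *: v) hB.
  have e : r1 *: v - y + (y - r2 *: v) = (r1 - r2) *: v.
    by rewrite addrA subrK scalerBl.
  rewrite e gauge_hom ?subr_gt0 // hv.1 mulr1 in h2.
  rewrite /h in h1 *; lra.
pose S := [set r - sg * h r | r in [set: R]].
have hub : has_ubound S.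
  by exists (0 + h 0) => _ [r _ <-]; exact: key.
have cge : forall r, r - sg * h r <= sup S.
  by move=> r; apply: (ub_le_sup hub); exists r.
have cle : forall r, sup S <= r + h r.
  move=> r; apply: ge_sup; first by exists (0 - sg * h 0), 0.
  by move=> _ [r' _ <-]; exact: key.
exists (sup S) => r; rewrite ge_max; apply/andP; split.
  by have := cle r; rewrite /h; lra.
rewrite ler_pdivrMr //.
by have := cge r; rewrite /h; lra.
Qed.

Lemma le_sum_elem (R : realType) (T : eqType) (r : seq T) (f : T -> R) x :
  (forall a, 0 <= f a) -> x \in r -> f x <= \sum_(a <- r) f a.
Proof.
move=> f0; elim: r => [//|b r IH]; rewrite in_cons big_cons => /orP [/eqP ->|xr].
  by rewrite lerDl sumr_ge0.
by apply: le_trans (IH xr) _; rewrite lerDr.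
Qed.

Lemma cont_sum (R : realType) (T : Type) (r : seq T) (w s : T -> R) (tau : R) :
  continuous (fun t : R => \sum_(a <- r) w a * Num.max (t - s a) (- (t - s a) * tau)).
Proof.
elim: r => [|b r IH].
  under eq_fun do rewrite big_nil; exact: cst_continuous.
under eq_fun do rewrite big_cons.
move=> t.
apply: (@continuousD _ _ _ (fun t : R => w b * Num.max (t - s b) (- (t - s b) * tau))
  (fun t : R => \sum_(a <- r) w a * Num.max (t - s a) (- (t - s a) * tau))); last exact: IH.
apply: (@continuousM _ _ (fun _ : R => w b) (fun t : R => Num.max (t - s b) (- (t - s b) * tau))).
  exact: cst_continuous.
apply: (@continuous_max _ _ (fun t => t - s b) (fun t => - (t - s b) * tau)).
  apply: (@continuousB _ _ _ (fun t : R => t) (fun _ => s b)); [exact: cvg_id|exact: cst_continuous].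
apply: (@continuousM _ _ (fun t : R => - (t - s b)) (fun _ => tau)); last exact: cst_continuous.
apply: (@continuousN _ _ _ (fun t : R => t - s b)).
apply: (@continuousB _ _ _ (fun t : R => t) (fun _ => s b)); [exact: cvg_id|exact: cst_continuous].
Qed.

Theorem mainTheorem2 (R : realType) (d : nat) (B : set 'rV[R^o]_d)
  (hB : gauge_body B) (v : 'rV[R^o]_d) (hv : skew_dirs B v)
  (A : {fset 'rV[R^o]_d}) (w : 'rV[R^o]_d -> R)
  (hw : forall a, a \in A -> 0 < w a)
  (p : 'rV[R^o]_d) (hline : forall a, a \in A -> exists t : R, a = p + t *: v) :
  exists t : R, forall x : 'rV[R^o]_d,
    \sum_(a <- A) w a * gaugeB B (p + t *: v - a)
      <= \sum_(a <- A) w a * gaugeB B (x - a).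
Proof.
have s0 := skew_pos _ _ _ _ hB hv.
pose s a := xget 0 [set t : R | a = p + t *: v].
have hs : forall a, a \in A -> a = p + s a *: v.
  move=> a aA; exact: (xgetPex 0 (hline a aA)).
pose tau := (skewness B)^-1.
pose F t := \sum_(a <- A) w a * Num.max (t - s a) (- (t - s a) * tau).
have eqF : forall t, \sum_(a <- A) w a * gaugeB B (p + t *: v - a) = F t.
  move=> t; rewrite /F big_seq [RHS]big_seq; apply: eq_bigr => a aA.
  rewrite [in X in gaugeB B X](hs a aA) (_ : p + t *: v - (p + s a *: v) = (t - s a) *: v).
    by rewrite gauge_line.
  by rewrite opprD addrACA subrr add0r scalerBl.
have w0 : forall a, a \in A -> 0 <= w a by move=> a aA; exact: ltW (hw a aA).
have key : forall x, exists c, F c <= \sum_(a <- A) w a * gaugeB B (x - a).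
  move=> x; have [c hc] := sandwich _ _ _ v (x - p) hB hv.
  exists c; rewrite /F big_seq [X in _ <= X]big_seq; apply: ler_sum => a aA.
  apply: ler_wpM2l; first exact: w0.
  rewrite (_ : x - a = (x - p) - s a *: v); first exact: hc.
  by rewrite {1}(hs a aA) opprD addrA.
pose K := \sum_(a <- A) `|s a|.
have K0 : 0 <= K by rewrite sumr_ge0.
have sK : forall a, a \in A -> `|s a| <= K.
  move=> a aA; exact: (le_sum_elem _ _ _ (fun a => `|s a|) a (fun _ => normr_ge0 _) aA).
have tau0 : 0 < tau by rewrite invr_gt0.
have KK : - K <= K by lra.
have [tm tmK tmin] := EVT_min KK (continuous_subspaceT (cont_sum _ _ A w s tau)).
have Fmin : forall t, F tm <= F t.
  move=> t; have [tK|tK] := leP t K.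
    have [tK'|tK'] := leP (-K) t.
      by apply: tmin; rewrite in_itv /= tK tK'.
    apply: (le_trans (tmin (-K) _)); first by rewrite in_itv /= lexx KK.
    rewrite /F big_seq [X in _ <= X]big_seq; apply: ler_sum => a aA.
    apply: ler_wpM2l; first exact: w0.
    have := sK a aA; rewrite ler_norml => /andP [h1 h2].
    rewrite ge_max !le_max; apply/andP; split; apply/orP; right; nra.
  apply: (le_trans (tmin K _)); first by rewrite in_itv /= lexx KK.
  rewrite /F big_seq [X in _ <= X]big_seq; apply: ler_sum => a aA.
  apply: ler_wpM2l; first exact: w0.
  have := sK a aA; rewrite ler_norml => /andP [h1 h2].
  rewrite ge_max !le_max; apply/andP; split; apply/orP; left; nra.
exists tm => x; rewrite eqF; have [c hc] := key x; exact: le_trans (Fmin c) hc.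
Qed.
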